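(* Let $N>1$ be odd and let $\mathcal{C}$ be a metaplectic modular category with the fusion rules of $SO(N)_2$, and let $Z$ be its unique nontrivial simple object of dimension $1$. Then $Z$ is a boson: its twist satisfies $\theta_Z=1$.
   Context: The fusion rules of $SO(N)_2$ ($N>1$ odd): there are simple objects $\mathbf{1}, Z$ of dimension $1$, $X_1,X_2$ of dimension $\sqrt N$, and $Y_1,\dots,Y_{(N-1)/2}$ of dimension $2$, with $Z\otimes Z\cong\mathbf 1$, $Z\otimes Y_i\cong Y_i$, $Z\otimes X_1\cong X_2$, $Z\otimes X_2\cong X_1$, $X_i^{\otimes 2}\cong \mathbf{1}\oplus\bigoplus_{j}Y_j$, $X_1\otimes X_2\cong Z\oplus\bigoplus_j Y_j$, $Y_i\otimes Y_j\cong Y_{\min\{i+j,N-i-j\}}\oplus Y_{|i-j|}$ for $i\ne j$, and $Y_i^{\otimes 2}\cong \mathbf{1}\oplus Z\oplus Y_{\min\{2i,N-2i\}}$. A metaplectic modular category is a unitary modular category with the same fusion rules as $SO(N)_2$ for some odd $N>1$. *)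

(* Defs.v *)
From HB Require Import structures.
From mathcomp Require Import all_boot all_order all_algebra.
Set Implicit Arguments. Unset Strict Implicit. Unset Printing Implicit Defensive.
Import Order.TTheory GRing.Theory Num.Theory.
Local Open Scope ring_scope.

(* ---------- labels of SO(N)_2 ----------
   label 0 = 1, label 1 = Z, label 2 = X_1, label 3 = X_2,
   label (j+3) = Y_j  for 1 <= j <= (N-1)/2.                           *)
Definition nlab (N : nat) : nat := (N./2 + 3).+1.
Definition lab (N : nat) := 'I_(nlab N).
Definition lab1 {N : nat} : lab N := inord 0.
Definition labZ {N : nat} : lab N := inord 1.

Definition ymin (N s : nat) : nat := minn s (N - s).

(* fusb N a b c  <=>  c occurs (with multiplicity 1) in a (x) b.
   All SO(N)_2 fusion multiplicities are 0 or 1.                        *)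
Definition fusb (N a b c : nat) : bool :=
  if a == 0%N then c == b
  else if b == 0%N then c == a
  else if a == 1%N then
    (if b == 1%N then c == 0%N else if b == 2%N then c == 3%N
     else if b == 3%N then c == 2%N else c == b)
  else if b == 1%N then
    (if a == 2%N then c == 3%N else if a == 3%N then c == 2%N else c == a)
  else if (a <= 3)%N && (b <= 3)%N then
    [|| (a == b) && (c == 0%N), (a != b) && (c == 1%N) | (4 <= c)%N]
  else if (a <= 3)%N || (b <= 3)%N then (c == 2%N) || (c == 3%N)
  else
    let i := (a - 3)%N in let j := (b - 3)%N in
    if i == j then [|| c == 0%N, c == 1%N | c == (ymin N (i + i) + 3)%N]
    else (c == (ymin N (i + j) + 3)%N) || (c == ((i - j) + (j - i) + 3)%N).

Definition adm {N : nat} (a b c : lab N) : bool := fusb N a b c.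

Section Data.
Variables (C : numClosedFieldType) (N : nat).
Notation L := (lab N).
(* F a b c d e f = [F^{abc}_d]_{e f} : basis change from
   ((a b)_e c)_d  to  (a (b c)_f)_d   (Bonderson conventions).
   R a b c = R^{ab}_c.                                                    *)
Variables (F : L -> L -> L -> L -> L -> L -> C) (R : L -> L -> L -> C).

Definition admF (a b c d e f : L) : bool :=
  [&& adm a b e, adm e c d, adm b c f & adm a f d].

Definition F_support : Prop :=
  forall a b c d e f, ~~ admF a b c d e f -> F a b c d e f = 0.
Definition R_support : Prop :=
  forall a b c, ~~ adm a b c -> R a b c = 0.

Definition F_unit_normalized : Prop :=
  forall a b c d e f, [|| a == lab1, b == lab1 | c == lab1] ->
    admF a b c d e f -> F a b c d e f = 1.

Definition pentagon : Prop :=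
  forall a b c d e f g k l : L,
    F f c d e g l * F a b l e f k =
    \sum_(h : L) F a b c g f h * F a h d e g k * F b c d k h l.

Definition hexagons : Prop :=
  forall a b c d e g : L,
    (R c a e * F a c b d e g * R c b g =
       \sum_(f : L) F c a b d e f * R c f d * F a b c d f g)
 /\ ((R a c e)^-1 * F a c b d e g * (R b c g)^-1 =
       \sum_(f : L) F c a b d e f * (R f c d)^-1 * F a b c d f g).

Definition F_unitary : Prop :=
  forall a b c d e e' : L,
    adm a b e -> adm e c d -> adm a b e' -> adm e' c d ->
    \sum_(f : L) F a b c d e f * (F a b c d e' f)^* = (e == e')%:R.
Definition R_unitary : Prop :=
  forall a b c, adm a b c -> R a b c * (R a b c)^* = 1.

(* quantum dimension (all labels are self-dual): d_a = |[F^{aaa}_a]_{11}|^-1 *)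
Definition qdim (a : L) : C := (`|F a a a a lab1 lab1|)^-1.

Definition twist (a : L) : C := \sum_(c : L) (qdim c / qdim a) * R a a c.

(* unnormalised S-matrix (all labels self-dual) *)
Definition Smatrix : 'M[C]_(nlab N) :=
  \matrix_(a, b) \sum_(c : L) (adm a b c)%:R * (twist c / (twist a * twist b)) * qdim c.

Definition modular : Prop := \det Smatrix != 0.

Definition unitary_modular_SO2 : Prop :=
  F_support /\ R_support /\ F_unit_normalized /\ pentagon /\
  hexagons /\ F_unitary /\ R_unitary /\ modular.
End Data.

(* Main.v *)
Require Import Defs.
From HB Require Import structures.
From mathcomp Require Import all_boot all_order all_algebra zify ring.
Import Order.TTheory GRing.Theory Num.Theory.
Local Open Scope ring_scope.
Definition zi (b : nat) : nat := if b == 0%N then 1%N else if b == 1%N then 0%N else if b == 2%N then 3%N else if b == 3%N then 2%N else b.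
Lemma fusb_0l N b c : fusb N 0 b c = (c == b). Proof. by []. Qed.
Lemma fusb_l0 N a c : fusb N a 0 c = (c == a). Proof. by rewrite /fusb; case: eqP => // ->. Qed.
Lemma fusb_1l N b c : fusb N 1 b c = (c == zi b).
Proof. rewrite /fusb /zi /=. by case: b => [|[|[|[|b]]]]. Qed.
Lemma fusb_l1 N a c : fusb N a 1 c = (c == zi a).
Proof. rewrite /fusb /zi /=. by case: a => [|[|[|[|a]]]]. Qed.
Lemma f1 N : fusb N 4 4 0 && fusb N 4 4 1 && fusb N 2 2 0 && fusb N 2 2 4. Proof. by []. Qed.
Lemma ziK n : zi (zi n) = n. Proof. by case: n => [|[|[|[|n]]]]. Qed.

Lemma vl N (HN : (1 < N)%N) k : (k < 5)%N -> nat_of_ord (inord k : lab N) = k.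
Proof. move=> hk; rewrite inordK // /nlab. have : (0 < N./2)%N. by case: N HN => [|[|n]]. lia. Qed.

Lemma sum1 (C : numClosedFieldType) (T : finType) (f0 : T) (G : T -> C) :
  (forall f, f != f0 -> G f = 0) -> \sum_f G f = G f0.
Proof. by move=> H; rewrite (bigD1 f0) //= big1 ?addr0 // => f /H. Qed.

Lemma alg (K : fieldType) (r F1 F2 F3 G G' H H' RZY RYZ Y1 YZ : K) :
 F1 != 0 -> RZY != 0 -> RYZ != 0 -> Y1 != 0 -> YZ != 0 -> H != 0 -> H' != 0 ->
 r * F1 * RZY = F1 * RZY * F2 ->
 RYZ * F2 * RYZ = F3 * 1 * F1 ->
 G * G = F3 * 1 * F1 ->
 YZ * H * RYZ = H * Y1 * G ->
 Y1 * H' * RYZ = H' * YZ * G' ->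
 Y1^-1 * H' * RZY^-1 = H' * YZ^-1 * G' ->
 RZY * RYZ = 1 -> r = 1.
Proof.
move=> nF1 nZY nYZ nY1 nYZ' nH nH' e1 e2 e3 e4 e5 e6 e7.
have eG : G = YZ * RYZ / Y1.
  apply: (mulIf nY1); rewrite divfK //; apply: (mulfI nH).
  have -> : H * (G * Y1) = H * Y1 * G by ring.
  by rewrite -e4; ring.
have eG1 : G' = Y1 * RYZ / YZ.
  apply: (mulIf nYZ'); rewrite divfK //; apply: (mulfI nH').
  have -> : H' * (G' * YZ) = H' * YZ * G' by ring.
  by rewrite -e5; ring.
have eZY : RZY = RYZ^-1 by apply: (mulIf nYZ); rewrite mulVf // e7.
rewrite eZY eG1 in e6.
have h : YZ ^+ 2 = Y1 ^+ 2.
  rewrite invrK in e6.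
  have -> : YZ ^+ 2 = (Y1^-1 * H' * RYZ) * (YZ ^+ 2 * Y1 / (H' * RYZ)) by field; rewrite ?nH' ?nYZ ?nY1 ?nYZ'.
  rewrite e6; field; by rewrite ?nH' ?nYZ ?nY1 ?nYZ'.
have eF2 : F2 = 1.
  apply: (mulfI nYZ); apply: (mulfI nYZ).
  have -> : RYZ * (RYZ * F2) = RYZ * F2 * RYZ by ring.
  rewrite e2 -e3 eG mulr1.
  have -> : YZ * RYZ / Y1 * (YZ * RYZ / Y1) = RYZ * RYZ * YZ ^+ 2 / Y1 ^+2 by field.
  by rewrite h mulfK // expf_neq0.
have er : r = F2.
  apply: (mulIf nZY); apply: (mulIf nF1).
  have -> : F2 * RZY * F1 = F1 * RZY * F2 by ring.
  by rewrite -e1; ring.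
by rewrite er.
Qed.

Lemma alg2 (K : fieldType) (a b P P2 Qa Qb Q2a Q2b RZY RYZ : K) :
  a != 0 -> b != 0 -> P != 0 -> P2 != 0 -> RYZ != 0 -> Q2a != 0 -> Q2b != 0 ->
  a * P * a = Qa * 1 * Qb -> b^-1 * P * b^-1 = Qa * 1^-1 * Qb ->
  a * P2 * a = Q2a * RZY * Q2b -> b^-1 * P2 * b^-1 = Q2a * RYZ^-1 * Q2b ->
  RZY * RYZ = 1.
Proof.
move=> na nb nP nP2 nR nQa nQb e1 e2 e3 e4.
rewrite invr1 mulr1 in e2; rewrite mulr1 -e2 in e1.
have hab : (a * b) ^+ 2 = 1.
  have -> : (a * b) ^+ 2 = (a * P * a) * b ^+ 2 / P by field; rewrite ?nP.
  by rewrite e1; field; rewrite ?nP ?nb.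
have hW : Q2a * Q2b != 0 by rewrite mulf_neq0.
have -> : RZY = (a * P2 * a) / (Q2a * Q2b) by rewrite e3; field; rewrite ?nQa ?nQb.
have -> : a * P2 * a = (a * b) ^+ 2 * (b^-1 * P2 * b^-1) by field; rewrite ?nb.
rewrite hab mul1r e4; field; by rewrite ?nQa ?nQb ?nR.
Qed.

Arguments alg2 {K a b P P2 Qa Qb Q2a Q2b RZY RYZ}.
Arguments alg {K r F1 F2 F3 G G' H H' RZY RYZ Y1 YZ}.
Section Main.
Variables (C : numClosedFieldType) (N : nat) (HN : (1 < N)%N)
  (F : lab N -> lab N -> lab N -> lab N -> lab N -> lab N -> C)
  (R : lab N -> lab N -> lab N -> C).
Hypotheses (Fs : F_support F) (Rs : R_support R) (Fn : F_unit_normalized F)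
  (Pe : pentagon F) (Hx : hexagons F R) (Fu : F_unitary F) (Ru : R_unitary R).

Let L := lab N.
Let l0 : L := lab1.
Let lZ : L := labZ.
Let lX : L := inord 2.
Let lX' : L := inord 3.
Let lY : L := inord 4.

Lemma v0 : nat_of_ord l0 = 0%N. Proof. exact: vl. Qed.
Lemma vZ : nat_of_ord lZ = 1%N. Proof. exact: vl. Qed.
Lemma vX : nat_of_ord lX = 2%N. Proof. exact: vl. Qed.
Lemma vX' : nat_of_ord lX' = 3%N. Proof. exact: vl. Qed.
Lemma vY : nat_of_ord lY = 4%N. Proof. exact: vl. Qed.

Lemma admZl (b f : L) : adm lZ b f -> nat_of_ord f = zi b.
Proof. by rewrite /adm vZ fusb_1l => /eqP. Qed.
Lemma admZr (a f : L) : adm a lZ f -> nat_of_ord f = zi a.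
Proof. by rewrite /adm vZ fusb_l1 => /eqP. Qed.
Lemma admZm (f d : L) : adm lZ f d -> nat_of_ord f = zi d.
Proof. by rewrite /adm vZ fusb_1l => /eqP ->; rewrite ziK. Qed.
Lemma adm0l (b f : L) : adm l0 b f -> f = b.
Proof. by rewrite /adm v0 fusb_0l => /eqP/val_inj. Qed.

Lemma Rnz a b c : adm a b c -> R a b c != 0.
Proof. move=> h; apply/eqP => e; have := Ru _ _ _ h; rewrite e mul0r => /eqP; by rewrite eq_sym oner_eq0. Qed.

Lemma Fz_bc a b c d e f0 : (forall f, adm b c f -> f = f0) ->
  forall f, f != f0 -> F a b c d e f = 0.
Proof.
move=> U f nf; apply: Fs _ _ _ _ _ _ _; apply/negP; case/and4P => _ _ h _.
by move: nf; rewrite (U _ h) eqxx.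
Qed.
Lemma Fz_af a b c d e f0 : (forall f, adm a f d -> f = f0) ->
  forall f, f != f0 -> F a b c d e f = 0.
Proof.
move=> U f nf; apply: Fs _ _ _ _ _ _ _; apply/negP; case/and4P => _ _ _ h.
by move: nf; rewrite (U _ h) eqxx.
Qed.

Lemma Fnz a b c d e f0 : admF a b c d e f0 -> 
  (forall f, f != f0 -> F a b c d e f = 0) -> F a b c d e f0 != 0.
Proof.
move=> hA U; case/and4P: (hA) => h1 h2 _ _.
have := Fu _ _ _ _ _ _ h1 h2 h1 h2; rewrite eqxx (@sum1 _ _ f0); last first.
  by move=> f /U ->; rewrite mul0r.
by move=> ee; apply/eqP => e0; move: ee; rewrite e0 mul0r => /eqP; rewrite eq_sym oner_eq0.
Qed.

Arguments Fz_bc {a b c d e f0}.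
Arguments Fz_af {a b c d e f0}.

Ltac ad := rewrite /admF /adm ?v0 ?vZ ?vX ?vX' ?vY ?fusb_0l ?fusb_l0 ?eqxx //.

Lemma U00 : forall f, adm l0 l0 f -> f = l0. Proof. by move=> f /adm0l. Qed.

Lemma R1 (c : L) : R c l0 c = 1 /\ R l0 c c = 1.
Proof.
have [e1 e2] := Hx l0 l0 c c c c.
rewrite (@sum1 _ _ l0) in e1; last by move=> f nf; rewrite (Fz_bc U00 f nf) !mul0r.
rewrite (@sum1 _ _ l0) in e2; last by move=> f nf; rewrite (Fz_bc U00 f nf) !mul0r.
have n1 : F l0 c l0 c c c = 1 by apply: Fn; ad.
have n2 : F c l0 l0 c c l0 = 1 by apply: Fn; ad; rewrite !orbT.
have n3 : F l0 l0 c c l0 c = 1 by apply: Fn; ad.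
rewrite n1 n2 n3 !mulr1 !mul1r in e1 e2.
have r1 : R c l0 c != 0 by apply: Rnz; ad.
have r2 : R l0 c c != 0 by apply: Rnz; ad.
split; first by apply: (mulfI r1); rewrite mulr1.
by apply/eqP; rewrite -invr_eq1; apply/eqP; apply: (mulfI (invr_neq0 r2)); rewrite mulr1.
Qed.

Lemma UZl (b f0 : L) : zi (nat_of_ord b) = nat_of_ord f0 -> forall f, adm lZ b f -> f = f0.
Proof. by move=> h f /admZl; rewrite h => /val_inj. Qed.
Lemma UZr (b f0 : L) : zi (nat_of_ord b) = nat_of_ord f0 -> forall f, adm b lZ f -> f = f0.
Proof. by move=> h f /admZr; rewrite h => /val_inj. Qed.
Lemma UZm (d f0 : L) : zi (nat_of_ord d) = nat_of_ord f0 -> forall f, adm lZ f d -> f = f0.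
Proof. by move=> h f /admZm; rewrite h => /val_inj. Qed.

Lemma UZY : forall f, adm lZ lY f -> f = lY. Proof. by apply: UZl; rewrite vY. Qed.
Lemma UYZ : forall f, adm lY lZ f -> f = lY. Proof. by apply: UZr; rewrite vY. Qed.
Lemma UZZ : forall f, adm lZ lZ f -> f = l0. Proof. by apply: UZl; rewrite vZ v0. Qed.
Lemma UZX : forall f, adm lZ lX f -> f = lX'. Proof. by apply: UZl; rewrite vX vX'. Qed.
Lemma UXZ : forall f, adm lX lZ f -> f = lX'. Proof. by apply: UZr; rewrite vX vX'. Qed.
Lemma UmZ : forall f, adm lZ f lZ -> f = l0. Proof. by apply: UZm; rewrite vZ v0. Qed.
Lemma UmY : forall f, adm lZ f lY -> f = lY. Proof. by apply: UZm; rewrite vY. Qed.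

Lemma MY : R lZ lY lY * R lY lZ lY = 1.
Proof.
have [i1 i2] := Hx lX lX lZ lZ lX' lX'.
have [j1 j2] := Hx lX lX lZ lY lX' lX'.
rewrite (@sum1 _ _ l0) in i1; last by move=> f nf; rewrite (Fz_af UmZ f nf) !mul0r.
rewrite (@sum1 _ _ l0) in i2; last by move=> f nf; rewrite (Fz_af UmZ f nf) !mul0r.
rewrite (@sum1 _ _ lY) in j1; last by move=> f nf; rewrite (Fz_af UmY f nf) !mul0r.
rewrite (@sum1 _ _ lY) in j2; last by move=> f nf; rewrite (Fz_af UmY f nf) !mul0r.
have [r1 r2] := R1 lZ. rewrite r1 in i1; rewrite r2 in i2.
apply: (alg2 _ _ _ _ _ _ _ i1 i2 j1 j2).
- by apply: Rnz; ad.
- by apply: Rnz; ad.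
- by apply: Fnz; [ad | exact: Fz_bc UZX].
- by apply: Fnz; [ad | exact: Fz_bc UZX].
- by apply: Rnz; ad.
- by apply: Fnz; [ad | exact: Fz_af UmY].
- by apply: Fnz; [ad | exact: Fz_bc UXZ].
Qed.

Lemma rZ : R lZ lZ l0 = 1.
Proof.
have [e1 _] := Hx lZ lY lZ lY l0 lY.
have [e2 _] := Hx lZ lZ lY lY lY lY.
have e3 := Pe lY lZ lZ lY l0 lY lY lY lY.
have [e4 _] := Hx lY lZ lY l0 lZ lY.
have [e5 e6] := Hx lY lZ lY lZ l0 lY.
rewrite (@sum1 _ _ lY) in e1; last by move=> f nf; rewrite (Fz_bc UZY f nf) !mul0r.
rewrite (@sum1 _ _ l0) in e2; last by move=> f nf; rewrite (Fz_bc UZZ f nf) !mul0r.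
rewrite (@sum1 _ _ l0) in e3; last by move=> f nf; rewrite (Fz_bc UZZ f nf) !mul0r.
rewrite (@sum1 _ _ lY) in e4; last by move=> f nf; rewrite (Fz_bc UYZ f nf) !mul0r.
rewrite (@sum1 _ _ lY) in e5; last by move=> f nf; rewrite (Fz_bc UYZ f nf) !mul0r.
rewrite (@sum1 _ _ lY) in e6; last by move=> f nf; rewrite (Fz_bc UYZ f nf) !mul0r.
have [r1 _] := R1 lY. rewrite r1 in e2.
have n1 : F lY l0 lY l0 lY lY = 1 by apply: Fn; ad; rewrite orbT.
rewrite n1 in e3.
apply: (alg _ _ _ _ _ _ _ e1 e2 e3 e4 e5 e6 MY).
- by apply: Fnz; [ad | exact: Fz_bc UZY].
- by apply: Rnz; ad.
- by apply: Rnz; ad.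
- by apply: Rnz; ad.
- by apply: Rnz; ad.
- by apply: Fnz; [ad | exact: Fz_bc UYZ].
- by apply: Fnz; [ad | exact: Fz_bc UYZ].
Qed.

Lemma twistZ : twist F R labZ = 1.
Proof.
rewrite /twist (@sum1 _ _ l0); last first.
  move=> c nc; rewrite Rs ?mulr0 //; apply/negP => /UZZ hc; by rewrite hc eqxx in nc.
rewrite -/lZ rZ mulr1 /qdim.
have n0 : F lab1 lab1 lab1 lab1 lab1 lab1 = 1 by apply: Fn; rewrite -/l0; ad.
rewrite n0 normr1 invr1 mul1r.
have hu := Fu lZ lZ lZ lZ l0 l0.
rewrite (@sum1 _ _ l0) in hu; last by move=> f nf; rewrite (Fz_bc UZZ f nf) mul0r.
have a1 : adm lZ lZ l0 by ad.
have a2 : adm l0 lZ lZ by ad.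
move: (hu a1 a2 a1 a2); rewrite eqxx -normCK => /eqP; rewrite sqrp_eq1 // => /eqP ->.
by rewrite !invr1.
Qed.

End Main.

Theorem lemma1 (C : numClosedFieldType) (N : nat) (HN : (1 < N)%N) (Nodd : odd N)
  (F : lab N -> lab N -> lab N -> lab N -> lab N -> lab N -> C)
  (R : lab N -> lab N -> lab N -> C) :
  unitary_modular_SO2 F R -> twist F R labZ = 1.
Proof.
case=> Fs [Rs [Fn [Pe [Hx [Fu [Ru _]]]]]].
exact: (@twistZ C N HN F R Fs Rs Fn Pe Hx Fu Ru).
Qed.
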